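(* Let $d\ge 1$, let $L:\mathbb{R}^d\times\mathbb{R}^{d+1}\to\mathbb{R}$ be a loss function such that $L(w,z)$ is convex in $w$ for every $z$, and let $\nabla_1 L(w,z)$ denote a (fixed choice of) sub-gradient of $L(\cdot,z)$ at $w$. Assume there are constants $A,B\ge 0$ such that $\|\nabla_1 L(w,z)\|^2\le A\,L(w,z)+B$ for all $w\in\mathbb{R}^d$ and $z\in\mathbb{R}^{d+1}$. Let $\eta>0$ with $1-0.5A\eta\neq 0$, let $\theta\in[0,\infty]$, let $g_1,g_2,\ldots\ge 0$ be gravity parameters, and let $z_1,z_2,\ldots\in\mathbb{R}^{d+1}$ be an arbitrary sequence. Define $w_1=0$ and, for $i\ge 1$, \[ w_{i+1}=T_1\big(w_i-\eta\nabla_1 L(w_i,z_i),\ \eta g_i,\ \theta\big). \] Then for every $T\ge 1$ and every $\bar w\in\mathbb{R}^d$, \[ \frac{1-0.5A\eta}{T}\sum_{i=1}^T\left[L(w_i,z_i)+\frac{g_i}{1-0.5A\eta}\,\|w_{i+1}\cdot I(|w_{i+1}|\le\theta)\|_1\right] \le \frac{\eta}{2}B+\frac{\|\bar w\|^2}{2\eta T}+\frac1T\sum_{i=1}^T\Big[L(\bar w,z_i)+g_i\,\|\bar w\cdot I(|w_{i+1}|\le\theta)\|_1\Big]. \]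
   Context: $\|\cdot\|$ is the Euclidean norm and $\|\cdot\|_1$ the $1$-norm. For $v=(v_1,\dots,v_d)\in\mathbb{R}^d$, $\alpha\ge 0$ and $\theta\in[0,\infty]$, the truncation operator is $T_1(v,\alpha,\theta)=(T_1(v_1,\alpha,\theta),\dots,T_1(v_d,\alpha,\theta))$ with $T_1(v_j,\alpha,\theta)=\max(0,v_j-\alpha)$ if $v_j\in[0,\theta]$, $=\min(0,v_j+\alpha)$ if $v_j\in[-\theta,0]$, and $=v_j$ otherwise. For vectors $v,v'\in\mathbb{R}^d$, $\|v\cdot I(|v'|\le\theta)\|_1:=\sum_{j=1}^d |v_j|\,I(|v'_j|\le\theta)$, where $I(\cdot)$ is the indicator function. *)

(* Defs.v *)
(* R : realType, vectors in R^d as row vectors 'rV[R]_d,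
   theta in [0, +oo] as an extended real. *)
From HB Require Import structures.
From mathcomp Require Import all_boot all_order all_algebra.
From mathcomp Require Import reals constructive_ereal.
Set Implicit Arguments. Unset Strict Implicit. Unset Printing Implicit Defensive.
Import Order.TTheory GRing.Theory Num.Theory.
Local Open Scope ring_scope.

Section Defs.
Variable R : realType.

Definition sqnorm (n : nat) (v : 'rV[R]_n) : R := \sum_(j < n) (v 0 j) ^+ 2.

Definition dotp (n : nat) (u v : 'rV[R]_n) : R := \sum_(j < n) u 0 j * v 0 j.

Definition T1s (x alpha : R) (theta : \bar R) : R :=
  if ((0 <= x) && (x%:E <= theta)%E) then Num.max 0 (x - alpha)
  else if ((x <= 0) && ((- x)%:E <= theta)%E) then Num.min 0 (x + alpha)
  else x.

Definition T1 (n : nat) (v : 'rV[R]_n) (alpha : R) (theta : \bar R) : 'rV[R]_n :=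
  \row_(j < n) T1s (v 0 j) alpha theta.

Definition l1_ind (n : nat) (v v' : 'rV[R]_n) (theta : \bar R) : R :=
  \sum_(j < n) `|v 0 j| * (if (`|v' 0 j|%:E <= theta)%E then 1 else 0).

End Defs.

(* Main.v *)
Require Import Defs.
From HB Require Import structures.
From mathcomp Require Import all_boot all_order all_algebra.
From mathcomp Require Import reals constructive_ereal.
From mathcomp Require Import ring lra.
Import Order.TTheory GRing.Theory Num.Theory.
Local Open Scope ring_scope.

Lemma maxrE (R : realType) (a b : R) : Num.max a b = if a < b then b else a.
Proof. by []. Qed.
Lemma minrE (R : realType) (a b : R) : Num.min a b = if a < b then a else b.
Proof. by []. Qed.

Lemma key_coord (R : realType) (x u a : R) (th : \bar R) : 0 <= a ->
  (T1s x a th - u)^+2 <= (x - u)^+2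
     - 2 * a * ((`|T1s x a th| - `|u|) * (if (`|T1s x a th|%:E <= th)%E then 1 else 0)).
Proof.
move=> a0; rewrite /T1s.
case: ifP => [/andP[x0 xth]|h1].
  rewrite maxrE.
  case: (ltP 0 (x - a)) => h.
    have Hy : (`|x - a|%:E <= th)%E.
      by apply: le_trans xth; rewrite lee_fin ger0_norm; [lra|exact: ltW].
    rewrite Hy mulr1 ger0_norm; last exact: ltW.
    case: (leP 0 u) => hu; [rewrite ger0_norm // | rewrite ltr0_norm //]; rewrite ?expr2; nra.
  have Hy : (`|0:R|%:E <= th)%E.
    by apply: le_trans xth; rewrite lee_fin normr0.
  rewrite Hy mulr1 normr0.
  case: (leP 0 u) => hu; [rewrite ger0_norm // | rewrite ltr0_norm //]; rewrite ?expr2; nra.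
case: ifP => [/andP[x0 xth]|h2].
  rewrite minrE.
  case: (ltP 0 (x + a)) => h.
    have Hy : (`|0:R|%:E <= th)%E.
      by apply: le_trans xth; rewrite lee_fin normr0; lra.
    rewrite Hy mulr1 normr0.
    case: (leP 0 u) => hu; [rewrite ger0_norm // | rewrite ltr0_norm //]; rewrite ?expr2; nra.
  have Hy : (`|x + a|%:E <= th)%E.
    by apply: le_trans xth; rewrite lee_fin ler0_norm //; lra.
  rewrite Hy mulr1 ler0_norm //.
  case: (leP 0 u) => hu; [rewrite ger0_norm // | rewrite ltr0_norm //]; rewrite ?expr2; nra.
have -> : (`|x|%:E <= th)%E = false.
  apply/negbTE/negP => hx.
  case: (leP 0 x) => hx0.
    by move: h1; rewrite hx0 /= -(ger0_norm hx0) hx.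
  by move: h2; rewrite (ltW hx0) /= -(ltr0_norm hx0) hx.
by rewrite mulr0 mulr0 subr0.
Qed.

Lemma key_vec (R : realType) n (v u : 'rV[R]_n) a th : 0 <= a ->
  sqnorm (T1 v a th - u) <= sqnorm (v - u)
    - 2 * a * (l1_ind (T1 v a th) (T1 v a th) th - l1_ind u (T1 v a th) th).
Proof.
move=> a0; rewrite /sqnorm /l1_ind -sumrB mulr_sumr -sumrB.
apply: ler_sum => j _; rewrite !mxE -mulrBl; exact: key_coord.
Qed.

Lemma sqnorm_expand (R : realType) n (a G : 'rV[R]_n) e :
  sqnorm (a - e *: G) = sqnorm a - 2 * e * dotp G a + e ^+ 2 * sqnorm G.
Proof.
rewrite /sqnorm /dotp !mulr_sumr -sumrB -big_split; apply: eq_bigr => j _.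
rewrite !mxE /=; ring.
Qed.

Lemma dotpN (R : realType) n (a b : 'rV[R]_n) : dotp a (- b) = - dotp a b.
Proof. rewrite /dotp -sumrN; apply: eq_bigr => j _; rewrite !mxE; ring. Qed.

Lemma sqnormN (R : realType) n (a : 'rV[R]_n) : sqnorm (- a) = sqnorm a.
Proof. rewrite /sqnorm; apply: eq_bigr => j _; rewrite !mxE sqrrN //. Qed.

Lemma sqnorm_ge0 (R : realType) n (a : 'rV[R]_n) : 0 <= sqnorm a.
Proof. rewrite /sqnorm; apply: sumr_ge0 => j _; exact: sqr_ge0. Qed.

Theorem theorem1 (R : realType) (d : nat)
  (L : 'rV[R]_d -> 'rV[R]_(d.+1) -> R)
  (grad : 'rV[R]_d -> 'rV[R]_(d.+1) -> 'rV[R]_d)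
  (A B eta : R) (theta : \bar R)
  (g : nat -> R) (z : nat -> 'rV[R]_(d.+1)) (w : nat -> 'rV[R]_d) :
  (0 < d)%N ->
  (* L(., z) is convex for every z *)
  (forall (zz : 'rV[R]_(d.+1)) (u v : 'rV[R]_d) (t : R), 0 <= t <= 1 ->
      L (t *: u + (1 - t) *: v) zz <= t * L u zz + (1 - t) * L v zz) ->
  (* grad w z is a sub-gradient of L(., z) at w *)
  (forall (zz : 'rV[R]_(d.+1)) (u v : 'rV[R]_d),
      L u zz + dotp (grad u zz) (v - u) <= L v zz) ->
  0 <= A -> 0 <= B ->
  (forall (u : 'rV[R]_d) (zz : 'rV[R]_(d.+1)),
      sqnorm (grad u zz) <= A * L u zz + B) ->
  0 < eta -> 1 - A * eta / 2 != 0 ->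
  (0 <= theta)%E ->
  (forall i, (1 <= i)%N -> 0 <= g i) ->
  w 1%N = 0 ->
  (forall i, (1 <= i)%N ->
     w i.+1 = T1 (w i - eta *: grad (w i) (z i)) (eta * g i) theta) ->
  forall (T : nat) (wbar : 'rV[R]_d), (1 <= T)%N ->
  (1 - A * eta / 2) / T%:R *
    \sum_(1 <= i < T.+1)
       (L (w i) (z i) + g i / (1 - A * eta / 2) * l1_ind (w i.+1) (w i.+1) theta)
  <= eta / 2 * B + sqnorm wbar / (2 * eta * T%:R)
     + 1 / T%:R * \sum_(1 <= i < T.+1)
         (L wbar (z i) + g i * l1_ind wbar (w i.+1) theta).
Proof.
move=> d0 _ Hsub A0 B0 Hg eta0 c0 th0 g0 w1 Hw T wbar T1P.
set c := 1 - A * eta / 2.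
set D := fun i => sqnorm (w i - wbar).
set Y := fun i => L wbar (z i) + g i * l1_ind wbar (w i.+1) theta.
have step : forall i, (1 <= i < T.+1)%N ->
   2 * eta * (c * L (w i) (z i) + g i * l1_ind (w i.+1) (w i.+1) theta)
   <= (D i - D i.+1) + (2 * eta * Y i + eta ^+ 2 * B).
  move=> i /andP[i1 _].
  have K := @key_vec R d (w i - eta *: grad (w i) (z i)) wbar (eta * g i) theta
              (mulr_ge0 (ltW eta0) (g0 i i1)).
  rewrite -Hw // in K.
  have E : (w i - eta *: grad (w i) (z i)) - wbar = (w i - wbar) - eta *: grad (w i) (z i).
    by rewrite addrAC.
  rewrite E sqnorm_expand in K.
  have S := Hsub (z i) (w i) wbar.
  rewrite -opprB dotpN in S.
  have H1 : eta ^+ 2 * sqnorm (grad (w i) (z i)) <= eta ^+ 2 * (A * L (w i) (z i) + B).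
    by apply: ler_wpM2l; [exact: sqr_ge0 | exact: Hg].
  have H2 : 2 * eta * (L (w i) (z i) - L wbar (z i)) <= 2 * eta * dotp (grad (w i) (z i)) (w i - wbar).
    by apply: ler_wpM2l; [lra | lra].
  rewrite /D /Y /c.
  nra.
have Hsum := ler_sum_nat step.
rewrite big_split /= in Hsum.
have tel : \sum_(1 <= i < T.+1) (D i - D i.+1) = D 1%N - D T.+1.
  rewrite (eq_bigr (fun i => - (D i.+1 - D i))); last by move=> i _; rewrite opprB.
  by rewrite sumrN telescope_sumr // opprB.
rewrite tel in Hsum.
have D1 : D 1%N = sqnorm wbar by rewrite /D w1 sub0r sqnormN.
have DT : 0 <= D T.+1 by exact: sqnorm_ge0.
have Tpos : 0 < T%:R :> R by rewrite ltr0n.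
have -> : c / T%:R * \sum_(1 <= i < T.+1)
       (L (w i) (z i) + g i / c * l1_ind (w i.+1) (w i.+1) theta)
   = (2 * eta * T%:R)^-1 * \sum_(1 <= i < T.+1)
       (2 * eta * (c * L (w i) (z i) + g i * l1_ind (w i.+1) (w i.+1) theta)).
  rewrite !mulr_sumr; apply: eq_bigr => i _; field.
  by rewrite c0 /= (gt_eqF eta0) (gt_eqF Tpos).
have -> : eta / 2 * B + sqnorm wbar / (2 * eta * T%:R) + 1 / T%:R * \sum_(1 <= i < T.+1) Y i
   = (2 * eta * T%:R)^-1 * (sqnorm wbar + (2 * eta * \sum_(1 <= i < T.+1) Y i + eta ^+ 2 * B * T%:R)).
  field. by rewrite (gt_eqF eta0) (gt_eqF Tpos).
apply: ler_wpM2l.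
  by rewrite invr_ge0; apply: mulr_ge0; [lra | exact: ltW].
apply: (le_trans Hsum).
rewrite big_split /= -mulr_sumr sumr_const_nat subn1 /= mulr_natr D1; lra.
Qed.
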